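(* Let $\mathbb V$ be a $k$-module over $\mathbb W$ admitting a multiplicative basis $\mathfrak B=\{v_i\}_{i\in I}$ with respect to the basis $\mathfrak B'=\{w_j\}_{j\in J}$ of $\mathbb W$. If $\mathbb V$ is simple, then any two elements of $I$ are connected (i.e. $I/\sim$ has exactly one class).
   Context: Fix integers $n\ge 2$ and $1\le k\le n$ and an arbitrary field $\mathbb F$; $S_n$ denotes the symmetric group on $n$ letters. A $k$-module over a linear space $\mathbb W$ is an $\mathbb F$-vector space $\mathbb V$ (the dimensions of $\mathbb V$ and $\mathbb W$ are arbitrary, possibly infinite) together with, for every $\sigma\in S_n$, an $n$-linear map $\mathbb V^k\times\mathbb W^{n-k}\to\mathbb V$, $(x_1,\dots,x_k,y_{k+1},\dots,y_n)\mapsto[x_1,\dots,x_k,y_{k+1},\dots,y_n]_\sigma$ (interpreted as an $n$-ary bracket in which the $l$-th argument is placed in position $\sigma(l)$). A $k$-submodule of $\mathbb V$ is a linear subspace $U$ such that $[u,x_2,\dots,x_k,y_{k+1},\dots,y_n]_\sigma\in U$ for all $\sigma\in S_n$, $u\in U$, $x_l\in\mathbb V$, $y_l\in\mathbb W$. $\mathbb V$ is simple if its only $k$-submodules are $\{0\}$ and $\mathbb V$. A basis $\mathfrak B=\{v_i\}_{i\in I}$ of $\mathbb V$ is multiplicative (with respect to a basis $\mathfrak B'=\{w_j\}_{j\in J}$ of $\mathbb W$) if for all $\sigma\in S_n$, $i_1,\dots,i_k\in I$, $j_{k+1},\dots,j_n\in J$, the element $[v_{i_1},\dots,v_{i_k},w_{j_{k+1}},\dots,w_{j_n}]_\sigma$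 lies in $\mathbb F v_r$ for some $r\in I$. Index machinery: let $\overline I=\{\overline i:i\in I\}$ and $\overline J=\{\overline j:j\in J\}$ be sets of new symbols disjoint from $I$ and $J$, with the convention $\overline{\overline x}=x$. For $\sigma\in S_n$, $i_1,\dots,i_k\in I$, $j_{k+1},\dots,j_n\in J$, let $a_\sigma(i_1,\dots,i_k,j_{k+1},\dots,j_n)=\emptyset$ if $[v_{i_1},\dots,v_{i_k},w_{j_{k+1}},\dots,w_{j_n}]_\sigma=0$ and $=\{r\}$ if this bracket is a nonzero element of $\mathbb F v_r$. For $i,i_2,\dots,i_k\in I$, $j_{k+1},\dots,j_n\in J$ let $b_\sigma(i,\overline i_2,\dots,\overline i_k,\overline j_{k+1},\dots,\overline j_n)=\{i'\in I: a_\sigma(i',i_2,\dots,i_k,j_{k+1},\dots,j_n)=\{i\}\}$. For $i\in I$, $X=(x_2,\dots,x_k)\in(I\,\dot\cup\,\overline I)^{k-1}$, $Y=(y_{k+1},\dots,y_n)\in(J\,\dot\cup\,\overline J)^{n-k}$ define $\mu(i,X,Y)\subseteq I$ by: $\mu(i,X,Y)=\bigcup_{\sigma\in S_n}a_\sigma(i,X,Y)$ if all $x_l\in I$ and all $y_l\in J$; $\mu(i,X,Y)=\bigcup_{\sigma\in S_n}b_\sigma(i,X,Y)$ if all $x_l\in\overline I$ and all $y_l\in\overline J$; and $\mu(i,X,Y)=\emptyset$ otherwise. For $\mathfrak A\subseteq I$ set $\phi(\mathfrak A,X,Y)=\bigcup_{i\in\mathfrak A}\mu(i,X,Y)$. Connections: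 for distinct $i,i'\in I$, a connection from $i$ to $i'$ is a finite sequence $(X_1,Y_1,\dots,X_t,Y_t)$, $t\ge1$, with $X_m\in(I\,\dot\cup\,\overline I)^{k-1}$ and $Y_m\in(J\,\dot\cup\,\overline J)^{n-k}$, such that, setting $\mathfrak A_0=\{i\}$ and $\mathfrak A_m=\phi(\mathfrak A_{m-1},X_m,Y_m)$, one has $\mathfrak A_m\neq\emptyset$ for $1\le m\le t-1$ and $i'\in\mathfrak A_t$. We say $i$ is connected to $i'$ if such a connection exists; by convention every $i\in I$ is connected to itself. This relation, written $i\sim i'$, is an equivalence relation on $I$. *)

(* Defs.v *)
From HB Require Import structures.
From mathcomp Require Import all_boot all_order all_algebra all_fingroup.
Set Implicit Arguments.
Unset Strict Implicit.
Unset Printing Implicit Defensive.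
Import GRing.Theory.
Local Open Scope ring_scope.

Definition upd (T : Type) (m : nat) (f : 'I_m -> T) (l : 'I_m) (a : T) : 'I_m -> T :=
  fun l' => if l' == l then a else f l'.

Definition kcons (T : Type) (km1 : nat) (x0 : T) (xs : 'I_km1 -> T) : 'I_km1.+1 -> T :=
  fun l => match unlift ord0 l with None => x0 | Some m => xs m end.

Section KModules.
Variables (F : fieldType) (V W : lmodType F) (n km1 : nat).
(* k = km1.+1 ;  a k-module structure: for every sigma in S_n an n-linear map
   V^k x W^(n-k) -> V *)
Variable br : 'S_n -> ('I_km1.+1 -> V) -> ('I_(n - km1.+1) -> W) -> V.

Definition multilinear : Prop :=
  (forall s x y l (a : F) u u',
      br s (upd x l (a *: u + u')) y = a *: br s (upd x l u) y + br s (upd x l u') y) /\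
  (forall s x y l (a : F) u u',
      br s x (upd y l (a *: u + u')) = a *: br s x (upd y l u) + br s x (upd y l u')).

Definition is_submodule (U : V -> Prop) : Prop :=
  U 0 /\ (forall (a : F) x y, U x -> U y -> U (a *: x + y)) /\
  (forall s u (xs : 'I_km1 -> V) y, U u -> U (br s (kcons u xs) y)).

Definition is_simple : Prop :=
  forall U, is_submodule U -> (forall x, U x <-> x = 0) \/ (forall x, U x).

Variables (I J : Type) (v : I -> V) (w : J -> W).

Definition multiplicative : Prop :=
  forall s (ix : 'I_km1.+1 -> I) (js : 'I_(n - km1.+1) -> J),
    exists (r : I) (c : F), br s (v \o ix) (w \o js) = c *: v r.

(* a_sigma(i_1..i_k, j_{k+1}..j_n) = {r} *)
Definition a_sigma s (ix : 'I_km1.+1 -> I) (js : 'I_(n - km1.+1) -> J) (r : I) : Prop :=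
  br s (v \o ix) (w \o js) <> 0 /\ exists c : F, br s (v \o ix) (w \o js) = c *: v r.

(* barred symbols are encoded by [inr] *)
Definition mu (i : I) (X : 'I_km1 -> I + I) (Y : 'I_(n - km1.+1) -> J + J) (r : I) : Prop :=
  (exists (Xs : 'I_km1 -> I) (Ys : 'I_(n - km1.+1) -> J),
      (forall l, X l = inl (Xs l)) /\ (forall l, Y l = inl (Ys l)) /\
      exists s, a_sigma s (kcons i Xs) Ys r) \/
  (exists (Xs : 'I_km1 -> I) (Ys : 'I_(n - km1.+1) -> J),
      (forall l, X l = inr (Xs l)) /\ (forall l, Y l = inr (Ys l)) /\
      exists s, a_sigma s (kcons r Xs) Ys i).

Definition phi (A : I -> Prop) X Y (r : I) : Prop := exists i, A i /\ mu i X Y r.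

Definition step := (('I_km1 -> I + I) * ('I_(n - km1.+1) -> J + J))%type.

Fixpoint conn_seq (A : I -> Prop) (s : seq step) (i' : I) : Prop :=
  match s with
  | [::] => False
  | p :: s' =>
      match s' with
      | [::] => phi A p.1 p.2 i'
      | _ :: _ => (exists r, phi A p.1 p.2 r) /\ conn_seq (phi A p.1 p.2) s' i'
      end
  end.

Definition connected (i i' : I) : Prop :=
  i = i' \/ exists s : seq step, conn_seq (fun x => x = i) s i'.

End KModules.

Definition is_basis (F : fieldType) (V : lmodType F) (I : Type) (v : I -> V) : Prop :=
  (forall x : V, exists m (f : 'I_m -> I) (c : 'I_m -> F),
      x = \sum_(l < m) c l *: v (f l)) /\
  (forall m (f : 'I_m -> I) (c : 'I_m -> F), injective f ->
      \sum_(l < m) c l *: v (f l) = 0 -> forall l, c l = 0).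

(* Main.v *)
Require Import Defs.
From HB Require Import structures.
From mathcomp Require Import all_boot all_order all_algebra all_fingroup.
From Stdlib Require Import ClassicalEpsilon FunctionalExtensionality Classical.

Module Helpers.
Set Implicit Arguments. Unset Strict Implicit. Unset Printing Implicit Defensive.
Import GRing.Theory.
Local Open Scope ring_scope.
Definition eqI (T : Type) : Type := T.
Definition eqIb (T : Type) (a b : eqI T) : bool :=
  if excluded_middle_informative (a = b) then true else false.
Lemma eqIP (T : Type) : Equality.axiom (@eqIb T).
Proof. move=> a b; rewrite /eqIb; case: excluded_middle_informative => h; by constructor. Qed.
HB.instance Definition _ (T : Type) := hasDecEq.Build (eqI T) (@eqIP T).

Lemma coord0 (F : fieldType) (V : lmodType F) (T : eqType) (v : T -> V) :
  (forall m (f : 'I_m -> T) (c : 'I_m -> F), injective f ->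
      \sum_(l < m) c l *: v (f l) = 0 -> forall l, c l = 0) ->
  forall m (f : 'I_m -> T) (c : 'I_m -> F), \sum_(l < m) c l *: v (f l) = 0 ->
  forall x, \sum_(l < m | f l == x) c l = 0.
Proof.
move=> ind m f c H x.
set s := undup (map f (enum 'I_m)).
have us : uniq s by exact: undup_uniq.
have fs : forall l, f l \in s by move=> l; rewrite mem_undup map_f // mem_enum.
pose g (k : 'I_(size s)) := nth x s k.
pose d (k : 'I_(size s)) := \sum_(l < m | f l == g k) c l.
have E : \sum_(k < size s) d k *: v (g k) = \sum_(l < m) c l *: v (f l).
  rewrite (eq_bigr (fun k => \sum_(l < m) (if f l == g k then c l *: v (f l) else 0))); last first.
    move=> k _; rewrite /d scaler_suml big_mkcond /=; apply: eq_bigr => l _.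
    by case: eqP => // ->.
  rewrite exchange_big /=; apply: eq_bigr => l _.
  have ilt : (index (f l) s < size s)%N by rewrite index_mem.
  rewrite (bigD1 (Ordinal ilt)) //= /g nth_index // eqxx big1 ?addr0 // => k nk.
  case: eqP => // ek; exfalso; move/negP: nk; apply; apply/eqP/val_inj => /=.
  by rewrite ek index_uniq.
have ginj : injective g.
  move=> k1 k2; rewrite /g => /eqP; rewrite nth_uniq // => /eqP; exact: val_inj.
have d0 := ind _ g d ginj (etrans E H).
case xs : (x \in s).
  have ilt : (index x s < size s)%N by rewrite index_mem.
  have := d0 (Ordinal ilt); by rewrite /d /g /= nth_index.
apply: big1 => l /eqP fl; by rewrite -fl fs in xs.
Qed.

Section Main.
Variables (F : fieldType) (V W : lmodType F) (n km1 : nat) (I J : Type).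
Variable br : 'S_n -> ('I_km1.+1 -> V) -> ('I_(n - km1.+1) -> W) -> V.
Variables (v : I -> V) (w : J -> W).

Lemma conn_rcons X Y r : forall s A i', conn_seq br v w A s i' -> mu br v w i' X Y r ->
  conn_seq br v w A (rcons s (X, Y)) r.
Proof.
elim=> [|p s IH] A i' //=.
case: s IH => [|q s] IH /=.
  move=> H M; split; first by exists i'.
  by exists i'.
move=> [ex H] M; split => //.
have := IH _ _ H M.
by [].
Qed.

Lemma conn_step i j X Y r : connected br v w i j -> mu br v w j X Y r -> connected br v w i r.
Proof.
move=> [<-|[s H]] M; right.
  by exists [:: (X, Y)] => /=; exists i.
exists (rcons s (X, Y)); exact: conn_rcons H M.
Qed.

Definition Rep (T : Type) (X : lmodType F) (u : T -> X) (P : T -> Prop) (z : X) :=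
  exists m (f : 'I_m -> T) (c : 'I_m -> F), (forall k, P (f k)) /\ z = \sum_(k < m) c k *: u (f k).

Lemma upd_id (T : Type) m (x : 'I_m -> T) l : upd x l (x l) = x.
Proof. apply: functional_extensionality => l'; rewrite /upd; by case: eqP => [->|]. Qed.

Lemma sub_lin (U : V -> Prop) (HU : is_submodule br U) (m : nat) (g : 'I_m -> V) (c : 'I_m -> F) :
  (forall k, U (g k)) -> U (\sum_(k < m) c k *: g k).
Proof.
case: HU => [U0 [UL _]].
elim: m g c => [|m IH] g c H; first by rewrite big_ord0.
rewrite big_ord_recr /= addrC; apply: UL => //; exact: IH.
Qed.

Lemma zero_dbl (X : zmodType) (a : X) : a = a + a -> a = 0.
Proof. by rewrite -{1}[a]addr0 => /addrI <-. Qed.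

Lemma expandX (ML : multilinear br) (U : V -> Prop) (U0 : U 0) (UL : forall a x y, U x -> U y -> U (a *: x + y)) s P x y l :
  Rep v P (x l) -> (forall b, P b -> U (br s (upd x l (v b)) y)) -> U (br s x y).
Proof.
case: ML => [MX _] [m [f [c [Pf E]]]] H.
rewrite -[x in br s x](upd_id x l) E; clear E.
elim: m f c Pf => [|m IH] f c Pf.
  rewrite big_ord0.
  have := MX s x y l 1 0 0; rewrite scale1r addr0 scale1r => /zero_dbl ->.
  exact: U0.
rewrite big_ord_recr /= addrC MX.
apply: UL; first exact: H.
apply: (IH (fun k => f (widen_ord (leqnSn m) k))) => k; exact: Pf.
Qed.

Lemma expandY (ML : multilinear br) (U : V -> Prop) (U0 : U 0) (UL : forall a x y, U x -> U y -> U (a *: x + y)) s x y l :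
  Rep w (fun _ => True) (y l) -> (forall b, U (br s x (upd y l (w b)))) -> U (br s x y).
Proof.
case: ML => [_ MY] [m [f [c [Pf E]]]] H.
rewrite -[y in br s x y](upd_id y l) E; clear E.
elim: m f c Pf => [|m IH] f c Pf.
  rewrite big_ord0.
  have := MY s x y l 1 0 0; rewrite scale1r addr0 scale1r => /zero_dbl ->.
  exact: U0.
rewrite big_ord_recr /= addrC MY.
apply: UL; first exact: H.
apply: (IH (fun k => f (widen_ord (leqnSn m) k))) => k; by [].
Qed.

Lemma kcons_eta (T : Type) (x : 'I_km1.+1 -> T) : kcons (x ord0) (fun m => x (lift ord0 m)) = x.
Proof. apply: functional_extensionality => l; rewrite /kcons; by case: unliftP => [j ->|->]. Qed.

Lemma choiceI (A : Type) (T : Type) (Q : A -> T -> Prop) :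
  (forall a, exists b, Q a b) -> exists g : A -> T, forall a, Q a (g a).
Proof.
move=> H; exists (fun a => proj1_sig (constructive_indefinite_description _ (H a))).
move=> a; exact: proj2_sig.
Qed.

Definition UU i := Rep v (connected br v w i).

Lemma split_l m p (a : 'I_m) : split (lshift p a) = inl a.
Proof. exact: (unsplitK (inl a)). Qed.
Lemma split_r m p (a : 'I_p) : split (rshift m a) = inr a.
Proof. exact: (unsplitK (inr a)). Qed.

Lemma UU_lin i (a : F) x y : UU i x -> UU i y -> UU i (a *: x + y).
Proof.
move=> [m1 [f1 [c1 [P1 ->]]]] [m2 [f2 [c2 [P2 ->]]]].
exists (m1 + m2)%N, (fun l => match split l with inl a => f1 a | inr b => f2 b end),
  (fun l => match split l with inl b => a * c1 b | inr b => c2 b end).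
split.
  by move=> l; case: (split l).
rewrite big_split_ord /=; congr (_ + _).
  rewrite scaler_sumr; apply: eq_bigr => l _; by rewrite split_l scalerA.
by apply: eq_bigr => l _; rewrite split_r.
Qed.

Lemma UU0 i : UU i 0.
Proof. exists 0%N, (fun _ => i), (fun _ => 0); split; [by case | by rewrite big_ord0]. Qed.


Lemma claimA (MU : Defs.multiplicative br v w) i s (ix : 'I_km1.+1 -> I) js :
  connected br v w i (ix ord0) -> UU i (br s (v \o ix) (w \o js)).
Proof.
move=> Ci; have [r [c E]] := MU s ix js.
case: (eqVneq (br s (v \o ix) (w \o js)) 0) => [->|nz].
  exists 0%N, (fun _ => i), (fun _ => 0); split; [by case | by rewrite big_ord0].
exists 1%N, (fun _ => r), (fun _ => c); split; last by rewrite big_ord1.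
move=> _; apply: (conn_step (X := fun m => inl (ix (lift ord0 m))) (Y := fun l => inl (js l)) Ci).
left; exists (fun m => ix (lift ord0 m)), js; do 2!split => //.
exists s; rewrite kcons_eta; split; [exact/eqP | by exists c].
Qed.

Lemma stageY (ML : multilinear br) (BW : is_basis w) i s x :
  (forall js, UU i (br s x (w \o js))) -> forall y, UU i (br s x y).
Proof.
move=> H.
suff Q : forall p y, (forall l : 'I_(n - km1.+1), (p <= l)%N -> exists b, y l = w b) ->
    UU i (br s x y).
  move=> y; apply: (Q (n - km1.+1)%N) => l; by rewrite leqNgt ltn_ord.
elim=> [|p IH] y Hy.
  have [js Hjs] := choiceI (fun l : 'I_(n - km1.+1) => Hy l isT).
  have -> : y = w \o js by apply: functional_extensionality => l; exact: Hjs.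
  exact: H.
case: (ltnP p (n - km1.+1)) => pN; last first.
  by apply: IH => l lp; move: (ltn_ord l); rewrite ltnNge (leq_trans pN lp).
pose l0 := Ordinal pN.
apply: (expandY ML (UU0 i) (@UU_lin i) (l := l0)).
  have [m [f [c E]]] := BW.1 (y l0); by exists m, f, c.
move=> b; apply: IH => l pl; rewrite /upd.
case: eqP => [_|ne]; first by exists b.
apply: Hy; rewrite ltn_neqAle pl andbT; apply/eqP => e; apply: ne; exact: val_inj.
Qed.

Definition PX i (l : 'I_km1.+1) b := l = ord0 -> connected br v w i b.

Lemma stageX (ML : multilinear br) (MU : Defs.multiplicative br v w) (BW : is_basis w) i s :
  forall x, (forall l, Rep v (PX i l) (x l)) -> forall y, UU i (br s x y).
Proof.
suff Q : forall p x, (forall l : 'I_km1.+1, (l < p)%N -> Rep v (PX i l) (x l)) ->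
    (forall l : 'I_km1.+1, (p <= l)%N -> exists b, PX i l b /\ x l = v b) ->
    forall y, UU i (br s x y).
  move=> x Hx; apply: (Q km1.+1) => [l _|l]; first exact: Hx.
  by rewrite leqNgt ltn_ord.
elim=> [|p IH] x Hx Hb y.
  have [ix Hix] := choiceI (fun l : 'I_km1.+1 => Hb l isT).
  have -> : x = v \o ix by apply: functional_extensionality => l; exact: (Hix l).2.
  apply: (stageY ML BW) => js; apply: claimA => //; exact: (Hix ord0).1.
case: (ltnP p km1.+1) => pN; last first.
  apply: IH => [l lp|l lp]; first by apply: Hx; apply: ltnW.
  by move: (ltn_ord l); rewrite ltnNge (leq_trans pN lp).
pose l0 := Ordinal pN.
apply: (expandX ML (UU0 i) (@UU_lin i) (l := l0) (P := PX i l0)).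
  by apply: Hx.
move=> b Pb; apply: IH => l pl; rewrite /upd.
  case: eqP => [e|ne]; first by rewrite e /= ltnn in pl.
  by apply: Hx; apply: ltnW.
case: eqP => [->|ne]; first by exists b.
apply: Hb; rewrite ltn_neqAle pl andbT; apply/eqP => e; apply: ne; exact: val_inj.
Qed.

Lemma UU_sub (ML : multilinear br) (MU : Defs.multiplicative br v w) (BV : is_basis v)
  (BW : is_basis w) i : is_submodule br (UU i).
Proof.
split; first exact: UU0.
split; first exact: UU_lin.
move=> s u xs y Hu; apply: (stageX ML MU BW) => l.
rewrite /kcons; case: unliftP => [j ->|->].
  case: BV => BV1 _; have [m [f [c E]]] := BV1 (xs j); exists m, f, c; split => // k e; by move: (neq_lift ord0 j); rewrite e eqxx.
case: Hu => [m [f [c [Pf E]]]]; exists m, f, c; split => // k _; exact: Pf.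
Qed.

Lemma main_aux : (2 <= n)%N -> (km1.+1 <= n)%N ->
  multilinear br -> is_basis v -> is_basis w ->
  Defs.multiplicative br v w -> is_simple br ->
  forall i i' : I, connected br v w i i'.
Proof.
move=> _ _ ML BV BW MU SI i i'.
have Ui : UU i (v i).
  exists 1%N, (fun _ => i), (fun _ => 1); split; first by move=> _; left.
  by rewrite big_ord1 scale1r.
have inj1 : forall T (g : 'I_1 -> T), injective g.
  by move=> T g a b _; apply: val_inj; rewrite (ord1 a) (ord1 b).
case: (SI _ (UU_sub ML MU BV BW i)) => [Z|All].
  have v0 := (Z (v i)).1 Ui.
  have := BV.2 1%N (fun _ => i) (fun _ => 1) (inj1 _ _).
  rewrite big_ord1 scale1r => /(_ v0 ord0) /eqP; by rewrite oner_eq0.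
have [m [f [c [Pf E]]]] := All (v i').
case: (classic (connected br v w i i')) => // nC; exfalso.
pose h (l : 'I_m.+1) : eqI I := if unlift ord0 l is Some k then f k else i'.
pose e (l : 'I_m.+1) : F := if unlift ord0 l is Some k then - c k else 1.
have S0 : \sum_(l < m.+1) e l *: v (h l) = 0.
  rewrite big_ord_recl /e /h unlift_none scale1r.
  under eq_bigr => k _ do rewrite liftK scaleNr.
  by rewrite sumrN -E subrr.
have := @coord0 F V (eqI I) v BV.2 m.+1 h e S0 i'.
rewrite big_mkcond big_ord_recl /e /h unlift_none eqxx big1 ?addr0.
  move=> H1; have : (1 : F) + 0 = 0 by []. by rewrite addr0 => /eqP; rewrite oner_eq0.
move=> k _; rewrite liftK; case: eqP => // fk.
by exfalso; apply: nC; rewrite -fk; exact: Pf.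
Qed.
End Main.
End Helpers.

Theorem mainTheorem8 (F : fieldType) (V W : lmodType F) (n km1 : nat)
  (I J : Type)
  (br : 'S_n -> ('I_km1.+1 -> V) -> ('I_(n - km1.+1) -> W) -> V)
  (v : I -> V) (w : J -> W) :
  (2 <= n)%N -> (km1.+1 <= n)%N ->
  multilinear br -> is_basis v -> is_basis w ->
  multiplicative br v w -> is_simple br ->
  forall i i' : I, connected br v w i i'.
Proof. exact: (@Helpers.main_aux F V W n km1 I J br v w). Qed.
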